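(* $\mathsf{SquaMS}$ has no final object.
   Context: Let $M_0=\{(r,s)\in[0,1]^2: r\in\{0,1\}\text{ or } s\in\{0,1\}\}$. A square metric space is a pair $(X,S_X)$ with $X$ a metric space with all distances at most $2$ and $S_X\colon M_0\to X$ injective such that (sq1) for $i\in\{0,1\}$, $r,s\in[0,1]$: $d_X(S_X(i,r),S_X(i,s))=|s-r|$ and $d_X(S_X(r,i),S_X(s,i))=|s-r|$; (sq2) $d_X(S_X(r,s),S_X(t,u))\ge|r-t|+|s-u|$ for all $(r,s),(t,u)\in M_0$. $\mathsf{SquaMS}$ has these as objects and short maps $f\colon X\to Y$ with $f\circ S_X=S_Y$ as morphisms. *)

(* Defs.v *)
From Stdlib Require Import Reals.
Open Scope R_scope.

Definition inM0 (p : R * R) : Prop :=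
  (0 <= fst p <= 1) /\ (0 <= snd p <= 1) /\
  (fst p = 0 \/ fst p = 1 \/ snd p = 0 \/ snd p = 1).

Definition M0 : Type := { p : R * R | inM0 p }.

Record SquareMS : Type := {
  carrier :> Type;
  dist : carrier -> carrier -> R;
  dist_ge0 : forall x y, 0 <= dist x y;
  dist_eq0 : forall x y, dist x y = 0 <-> x = y;
  dist_sym : forall x y, dist x y = dist y x;
  dist_tri : forall x y z, dist x z <= dist x y + dist y z;
  dist_le2 : forall x y, dist x y <= 2;
  S : M0 -> carrier;
  S_inj : forall p q, S p = S q -> p = q;
  sq1_vert : forall p q : M0,
    (fst (proj1_sig p) = 0 \/ fst (proj1_sig p) = 1) ->
    fst (proj1_sig q) = fst (proj1_sig p) ->
    dist (S p) (S q) = Rabs (snd (proj1_sig q) - snd (proj1_sig p));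
  sq1_horiz : forall p q : M0,
    (snd (proj1_sig p) = 0 \/ snd (proj1_sig p) = 1) ->
    snd (proj1_sig q) = snd (proj1_sig p) ->
    dist (S p) (S q) = Rabs (fst (proj1_sig q) - fst (proj1_sig p));
  sq2 : forall p q : M0,
    dist (S p) (S q) >=
      Rabs (fst (proj1_sig p) - fst (proj1_sig q)) +
      Rabs (snd (proj1_sig p) - snd (proj1_sig q))
}.

Definition is_SquaMS_mor (X Y : SquareMS) (f : X -> Y) : Prop :=
  (forall x y : X, dist Y (f x) (f y) <= dist X x y) /\
  (forall p : M0, f (S X p) = S Y p).

Definition is_final (T : SquareMS) : Prop :=
  forall X : SquareMS, exists f : X -> T,
    is_SquaMS_mor X T f /\ forall g : X -> T, is_SquaMS_mor X T g -> g = f.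

(* Main.v *)
Require Import Defs.
From Stdlib Require Import Reals Lra.
Open Scope R_scope.

Section Ext.
Variable T : SquareMS.

Definition odist (a b : option T) : R :=
  match a, b with
  | None, None => 0
  | Some x, Some y => Defs.dist T x y
  | _, _ => 2
  end.

Lemma odist_ge0 : forall x y, 0 <= odist x y.
Proof. intros [x|] [y|]; simpl; try lra; apply Defs.dist_ge0. Qed.

Lemma odist_eq0 : forall x y, odist x y = 0 <-> x = y.
Proof.
  intros [x|] [y|]; simpl; split; intro H; try lra; try discriminate; auto.
  - f_equal; apply (Defs.dist_eq0 T); auto.
  - inversion H; subst; apply (Defs.dist_eq0 T); auto.
Qed.

Lemma odist_sym : forall x y, odist x y = odist y x.
Proof. intros [x|] [y|]; simpl; auto; apply Defs.dist_sym. Qed.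

Lemma odist_tri : forall x y z, odist x z <= odist x y + odist y z.
Proof.
  intros [x|] [y|] [z|]; simpl;
  try apply Defs.dist_tri;
  repeat match goal with |- context [Defs.dist T ?a ?b] =>
    let h := fresh in let h2 := fresh in
    pose proof (Defs.dist_ge0 T a b) as h; pose proof (Defs.dist_le2 T a b) as h2;
    revert h h2; generalize (Defs.dist T a b); intros end; intros; lra.
Qed.

Lemma odist_le2 : forall x y, odist x y <= 2.
Proof. intros [x|] [y|]; simpl; try lra; apply Defs.dist_le2. Qed.

Definition oS (p : M0) : option T := Some (S T p).

Lemma oS_inj : forall p q, oS p = oS q -> p = q.
Proof. intros p q H; inversion H; apply (S_inj T); auto. Qed.

Definition Ext : SquareMS :=
  {| carrier := option T; Defs.dist := odist; Defs.dist_ge0 := odist_ge0;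
     Defs.dist_eq0 := odist_eq0; Defs.dist_sym := odist_sym; Defs.dist_tri := odist_tri;
     dist_le2 := odist_le2; S := oS; S_inj := oS_inj;
     sq1_vert := sq1_vert T; sq1_horiz := sq1_horiz T; sq2 := sq2 T |}.

Definition gmap (t : T) (a : Ext) : T :=
  match a with Some x => x | None => t end.

Lemma gmap_mor : forall t, is_SquaMS_mor Ext T (gmap t).
Proof.
  intro t; split.
  - intros [x|] [y|]; simpl; try lra.
    + apply Defs.dist_le2.
    + apply Defs.dist_le2.
    + rewrite (proj2 (Defs.dist_eq0 T t t) eq_refl); lra.
  - intro p; reflexivity.
Qed.
End Ext.

Lemma in00 : inM0 (0,0). Proof. unfold inM0; simpl; lra. Qed.
Lemma in11 : inM0 (1,1). Proof. unfold inM0; simpl; lra. Qed.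

Theorem mainTheorem20 : ~ exists T : SquareMS, is_final T.
Proof.
  intros [T HT].
  destruct (HT (Ext T)) as [f [_ Hu]].
  pose (p := exist inM0 (0,0) in00 : M0).
  pose (q := exist inM0 (1,1) in11 : M0).
  assert (E1 := Hu _ (gmap_mor T (S T p))).
  assert (E2 := Hu _ (gmap_mor T (S T q))).
  assert (E : gmap T (S T p) None = gmap T (S T q) None) by (rewrite E1, E2; reflexivity).
  simpl in E. apply (S_inj T) in E.
  assert (E' := f_equal (fun z => fst (proj1_sig z)) E). simpl in E'. lra.
Qed.
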